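(* Let $1\le k\le d$ and $\alpha\ge1$. Let $c$ be a map that sends every finite point set $P\subset\mathbb{R}^d$ to a subset $c(P)\subseteq P$ such that, for every such $P$, $c(P)$ is an $\alpha$-approximate core-set for the $k$-directional height of $P$. Then $c$ is an $\alpha^{2k}$-composable core-set for determinant maximization with parameter $k$: for every integer $m\ge1$ and all finite point sets $P_1,\dots,P_m\subset\mathbb{R}^d$, $$\mathrm{MAXDET}_k\Big(\bigcup_{i=1}^m c(P_i)\Big)\ge\frac{1}{\alpha^{2k}}\,\mathrm{MAXDET}_k\Big(\bigcup_{i=1}^m P_i\Big).$$
   Context: For a finite set $S\subset\mathbb{R}^d$ with $|S|=k$, let $M_S$ be the $k\times d$ matrix whose rows are the points of $S$. For finite $P\subset\mathbb{R}^d$, $\mathrm{MAXDET}_k(P)=\max_{S\subseteq P,\,|S|=k}\det(M_SM_S^\top)$. Let $\mathcal{H}_{k-1}$ be the set of all $(k-1)$-dimensional linear subspaces of $\mathbb{R}^d$, and $\mathrm{dist}(p,\mathcal{H})$ the Euclidean distance from point $p$ to subspace $\mathcal{H}$. The $k$-directional height of $P$ with respect to $\mathcal{H}\in\mathcal{H}_{k-1}$ is $h(P,\mathcal{H})=\max_{p\in P}\mathrm{dist}(p,\mathcal{H})$. A subset $C\subseteq P$ is an $\alpha$-approximate core-set for the $k$-directional height of $P$ if $h(C,\mathcal{H})\ge h(P,\mathcal{H})/\alpha$ for every $\mathcal{H}\in\mathcal{H}_{k-1}$. *)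

(* Defs.v *)
From HB Require Import structures.
From mathcomp Require Import all_boot all_order all_algebra.
From mathcomp Require Import finmap.
From mathcomp Require Import classical_sets reals.
Set Implicit Arguments. Unset Strict Implicit. Unset Printing Implicit Defensive.
Import Order.TTheory GRing.Theory Num.Theory.
Local Open Scope ring_scope.
Local Open Scope classical_set_scope.

Section Defs.
Variables (R : realType) (d : nat).
Local Notation pt := 'rV[R]_d.

Definition enorm (p : pt) : R := Num.sqrt (\sum_(i < d) p ord0 i ^+ 2).

(* M_S : the k x d matrix whose rows are the points of S (in some enumeration;
   det(M_S M_S^T) does not depend on the order) *)
Definition ptmx (k : nat) (S : {fset pt}) : 'M[R]_(k, d) :=
  \matrix_(i < k) nth 0 (enum_fset S) i.

Definition maxdet (k : nat) (P : {fset pt}) : R :=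
  \big[Num.max/0]_(S <- enum_fset (fpowerset P) | #|` S|%fset == k)
     \det (ptmx k S *m (ptmx k S)^T).

(* a linear subspace is represented by a matrix whose row space it is;
   H is (k-1)-dimensional iff \rank H = k-1 *)
Definition dist (p : pt) (H : 'M[R]_d) : R :=
  inf [set enorm (p - h) | h in [set h : pt | (h <= H)%MS]].

Definition height (P : {fset pt}) (H : 'M[R]_d) : R :=
  \big[Num.max/0]_(p <- enum_fset P) dist p H.

Definition approx_coreset (k : nat) (alpha : R) (C P : {fset pt}) : Prop :=
  forall H : 'M[R]_d, \rank H = (k - 1)%N -> height C H >= height P H / alpha.

Definition fbigU (m : nat) (P : 'I_m -> {fset pt}) : {fset pt} :=
  \big[fsetU/fset0]_(i < m) P i.

End Defs.

(* Main.v *)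
Require Import Defs.
From HB Require Import structures.
From mathcomp Require Import all_boot all_order all_algebra.
From mathcomp Require Import finmap.
From mathcomp Require Import classical_sets reals.
From mathcomp Require Import ring lra perm.
Set Implicit Arguments. Unset Strict Implicit. Unset Printing Implicit Defensive.
Import Order.TTheory GRing.Theory Num.Theory.
Local Open Scope ring_scope.



Section Mx.
Variables (R : realType) (d : nat).
Local Notation pt := 'rV[R]_d.

Definition sq (p : pt) : R := (p *m p^T) 0 0.

Lemma sqE (p : pt) : sq p = \sum_(i < d) p 0 i ^+ 2.
Proof. by rewrite /sq mxE; apply: eq_bigr => i _; rewrite mxE expr2. Qed.

Lemma sq_ge0 p : 0 <= sq p.
Proof. by rewrite sqE sumr_ge0 // => i _; rewrite sqr_ge0. Qed.

Lemma sq_eq0 p : sq p = 0 -> p = 0.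
Proof.
rewrite sqE => H; apply/rowP => j; rewrite mxE.
have := psumr_eq0P (P := xpredT) (fun i _ => sqr_ge0 (p 0 i)) H (i:=j) isT.
by move/eqP; rewrite sqrf_eq0 => /eqP.
Qed.

Lemma enormE p : enorm p = Num.sqrt (sq p).
Proof. by rewrite /enorm sqE. Qed.

Section Split.
Variables (n : nat) (q : pt) (B : 'M[R]_(n, d)).
Let G := B *m B^T.
Hypothesis hG : \det G != 0.
Let uG : G \in unitmx. Proof. by rewrite unitmxE unitfE. Qed.
Let x0 := q *m B^T *m invmx G.
Let r := q - x0 *m B.

Let rB : r *m B^T = 0.
Proof.
by rewrite /r mulmxBl -mulmxA (mulmxKV uG) subrr.
Qed.

Let rB' (z : 'M[R]_(1, n)) : r *m (z *m B)^T = 0.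
Proof. by rewrite trmx_mul mulmxA rB mul0mx. Qed.

Lemma sq_split (z : 'M[R]_(1, n)) : sq (r + z *m B) = sq r + sq (z *m B).
Proof.
have h2 : z *m B *m r^T = 0 by rewrite -(trmxK (z *m B *m r^T)) trmx_mul trmxK rB' linear0.
rewrite /sq linearD /= mulmxDl !mulmxDr rB' h2.
by rewrite addr0 add0r !mxE.
Qed.

Lemma sq_min h : (h <= B)%MS -> sq r <= sq (q - h).
Proof.
case/submxP => D ->.
have -> : q - D *m B = r + (x0 - D) *m B by rewrite /r mulmxBl addrA subrK.
by rewrite sq_split lerDl sq_ge0.
Qed.

Lemma dist_split : dist q (<<B>>%MS) = Num.sqrt (sq r).
Proof.
rewrite /dist; apply/le_anti/andP; split.
  apply: ge_inf.
    exists 0 => _ [h _ <-]; by rewrite enormE sqrtr_ge0.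
  by exists (x0 *m B); rewrite /= ?genmxE ?submxMl // enormE.
apply: lb_le_inf.
  by exists (enorm r); exists (x0 *m B); rewrite /= ?genmxE ?submxMl.
move=> _ [h /= hB <-]; rewrite enormE ler_sqrt ?sq_ge0 //.
by apply: sq_min; rewrite genmxE in hB.
Qed.

Lemma gram_split :
  \det (col_mx q B *m (col_mx q B)^T) = dist q (<<B>>%MS) ^+ 2 * \det G.
Proof.
rewrite dist_split sqr_sqrtr ?sq_ge0 //.
pose E : 'M[R]_(1 + n) := block_mx 1 (- x0) 0 1.
have hE : E *m col_mx q B = col_mx r B.
  by rewrite mul_block_col !mul1mx mul0mx add0r mulNmx.
have dE : \det E = 1 by rewrite det_ublock !det1 mulr1.
have : \det (col_mx r B *m (col_mx r B)^T) = \det (col_mx q B *m (col_mx q B)^T).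
  rewrite -hE trmx_mul !mulmxA -(mulmxA E) !det_mulmx det_tr dE.
  by rewrite mul1r mulr1.
move <-.
rewrite tr_col_mx mul_col_row rB.
have -> : B *m r^T = 0 by rewrite -(trmxK (B *m r^T)) trmx_mul trmxK rB linear0.
by rewrite det_ublock det_mx11.
Qed.

End Split.
End Mx.



Section G.
Variables (R : realType) (d : nat).
Local Notation pt := 'rV[R]_d.

Lemma gram_sub_nz n (q : pt) (B : 'M[R]_(n, d)) :
  \det (col_mx q B *m (col_mx q B)^T) != 0 -> \det (B *m B^T) != 0.
Proof.
apply: contraNneq => /eqP/det0P [v v0 vG]; apply/det0P.
have vB : v *m B = 0.
  apply: sq_eq0; rewrite /sq.
  have -> : v *m B *m (v *m B)^T = (v *m (B *m B^T)) *m v^T by rewrite trmx_mul !mulmxA.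
  by rewrite vG mul0mx mxE.
exists (row_mx 0 v).
  by apply: contra v0 => /eqP; rewrite -row_mx0 => /eq_row_mx [_ ->].
by rewrite mulmxA mul_row_col mul0mx add0r vB mul0mx.
Qed.

Definition mxs n (s : seq pt) : 'M[R]_(n, d) := \matrix_(i < n) nth 0 s i.
Definition gram n (s : seq pt) : R := \det (mxs n s *m (mxs n s)^T).

Lemma gram_perm n (s t : seq pt) : perm_eq s t -> size t = n -> gram n s = gram n t.
Proof.
move=> pst <-; rewrite /gram; have /tuple_permP [p Hp] : perm_eq s (in_tuple t) by [].
have -> : mxs (size t) s = row_perm p (mxs (size t) t).
  apply/matrixP => i j; rewrite !mxE Hp /= (nth_map i) ?size_enum_ord //.
  by rewrite (tnth_nth 0) nth_ord_enum.
rewrite row_permE trmx_mul !mulmxA -(mulmxA (perm_mx p)) !det_mulmx det_tr det_perm.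
by rewrite mulrC mulrA -expr2 sqrr_sign mul1r.
Qed.

Lemma mxs_cons n (q : pt) s : mxs n.+1 (q :: s) = col_mx q (mxs n s).
Proof.
apply/matrixP => i j; rewrite !mxE.
case: splitP => k hk; rewrite hk.
  by rewrite (ord1 k).
by rewrite /mxs mxE.
Qed.

Lemma gram_cons n (q : pt) s : gram n.+1 (q :: s) =
  \det (col_mx q (mxs n s) *m (col_mx q (mxs n s))^T).
Proof. by rewrite /gram mxs_cons. Qed.

End G.



Section BM.
Variables (R : realType) (I : eqType).

Lemma bigmax_ge0 (s : seq I) (P : pred I) (F : I -> R) :
  0 <= \big[Num.max/0]_(i <- s | P i) F i.
Proof.
elim: s => [|x s IH]; rewrite ?big_nil ?big_cons //.
by case: (P x) => //; rewrite le_max IH orbT.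
Qed.

Lemma bigmax_ge (s : seq I) (P : pred I) (F : I -> R) x :
  x \in s -> P x -> F x <= \big[Num.max/0]_(i <- s | P i) F i.
Proof.
elim: s => [|y s IH] //; rewrite in_cons big_cons => /orP [/eqP <-|xs] Px.
  by rewrite Px le_max lexx.
by case: (P y); rewrite ?le_max IH ?orbT.
Qed.

Lemma bigmax_att (s : seq I) (P : pred I) (F : I -> R) :
  \big[Num.max/0]_(i <- s | P i) F i = 0 \/
  exists x, [/\ x \in s, P x & \big[Num.max/0]_(i <- s | P i) F i = F x].
Proof.
elim: s => [|y s IH]; rewrite ?big_nil ?big_cons; first by left.
case Py: (P y); last first.
  by case: IH => [->|[x [xs Px ->]]]; [left|right; exists x; rewrite in_cons xs orbT].
case: (leP (F y) (\big[Num.max/0]_(i <- s | P i) F i)) => h.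
  case: IH => [E|[x [xs Px E]]]; first by left.
  by right; exists x; rewrite in_cons xs orbT.
by right; exists y; rewrite in_cons eqxx.
Qed.
End BM.

Section U.
Variables (R : realType) (d m : nat) (Ps : 'I_m -> {fset 'rV[R]_d}).

Lemma mem_fbigU x : x \in fbigU Ps -> exists i, x \in Ps i.
Proof.
rewrite /fbigU; elim/big_rec: _ => [|i A _ IH]; first by rewrite inE.
by rewrite inE => /orP [xi|/IH //]; exists i.
Qed.

Lemma sub_fbigU i : fsubset (Ps i) (fbigU Ps).
Proof.
rewrite /fbigU (bigD1 i) //=; exact: fsubsetUl.
Qed.
End U.



Section Step.
Local Open Scope fset_scope.
Variables (R : realType) (d k' : nat) (alpha : R) (U UC : {fset 'rV[R]_d}).
Local Notation pt := 'rV[R]_d.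
Hypothesis alpha1 : 1 <= alpha.
Hypothesis hrep : forall q, q \in U -> exists P C : {fset pt},
  [/\ q \in P, C `<=` UC, C `<=` U & approx_coreset k'.+1 alpha C P].

Lemma gram_enum (A : {fset pt}) n (s : seq pt) :
  uniq s -> A =i s -> size s = n -> gram n (enum_fset A) = gram n s.
Proof.
move=> us As sn; apply: gram_perm sn.
by apply: uniq_perm => //; exact: fset_uniq.
Qed.

Lemma step n (T : {fset pt}) : T `<=` U -> #|`T| = k'.+1 ->
  0 < gram k'.+1 (enum_fset T) -> #|`(T `\` UC)| = n ->
  exists T', [/\ T' `<=` UC, #|`T'| = k'.+1 &
     gram k'.+1 (enum_fset T) / alpha ^+ (2 * n) <= gram k'.+1 (enum_fset T')].
Proof.
have a0 : 0 < alpha by apply: lt_le_trans alpha1.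
elim: n T => [|n IH] T TU cT gT cD.
  exists T; split => //; last by rewrite muln0 expr0 divr1.
  by rewrite -fsetD_eq0 -cardfs_eq0 cD.
have [q] : exists q, q \in T `\` UC.
  by apply/fset0Pn; rewrite -cardfs_gt0 cD.
rewrite in_fsetD => /andP [qUC qT].
have qU : q \in U := fsubsetP TU q qT.
have [P [C [qP CUC CU hPC]]] := hrep qU.
set T0 := T `\ q; set s0 := enum_fset T0.
have cT0 : size s0 = k'.
  by move: cT; rewrite (cardfsD1 q T) qT add1n => -[].
have us0 : uniq s0 := fset_uniq T0.
have hT : gram k'.+1 (enum_fset T) = gram k'.+1 (q :: s0).
  apply: gram_enum => /=; rewrite ?cT0 //.
    by rewrite us0 andbT; rewrite in_fsetD1 eqxx.
  move=> x; rewrite in_cons in_fsetD1.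
  by case: (eqVneq x q) => [->|] //=.
set B := mxs k' s0.
have gq : gram k'.+1 (q :: s0) = \det (col_mx q B *m (col_mx q B)^T) by rewrite gram_cons.
have hG : \det (B *m B^T) != 0.
  by apply: (gram_sub_nz (q := q)); rewrite -gq -hT gt_eqF.
set H := (<<B>>)%MS.
have rH : \rank H = (k'.+1 - 1)%N.
  rewrite subn1 /= /H genmxE; apply/eqP; rewrite eqn_leq rank_leq_row /=.
  have := mxrankM_maxl B B^T; rewrite mxrank_unit //.
  by rewrite unitmxE unitfE.
have dq0 : 0 <= dist q H by rewrite /H dist_split // sqrtr_ge0.
have eT : gram k'.+1 (enum_fset T) = dist q H ^+ 2 * \det (B *m B^T).
  by rewrite hT gq gram_split.
have dq : 0 < dist q H.
  rewrite lt_neqAle dq0 andbT; apply/eqP => E.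
  by move: gT; rewrite eT -E expr0n /= mul0r ltxx.
have dG : 0 < \det (B *m B^T).
  by move: gT; rewrite eT pmulr_rgt0 // exprn_gt0.
have hh : dist q H / alpha <= height C H.
  apply: le_trans (hPC H rH); apply: ler_wpM2r; first by rewrite invr_ge0 ltW.
  exact: (@bigmax_ge R _ (enum_fset P) (fun _ => true) (fun p => dist p H) q).
have hpos : 0 < height C H by apply: lt_le_trans hh; rewrite divr_gt0.
have [E0|[q' [q'C _ Eh]]] := bigmax_att (enum_fset C) (fun _ => true) (fun p => dist p H).
  by move: hpos; rewrite /height E0 ltxx.
rewrite -/(height C H) in Eh.
have q'UC : q' \in UC := fsubsetP CUC q' q'C.
have q'U : q' \in U := fsubsetP CU q' q'C.
have dq' : 0 < dist q' H by rewrite -Eh.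
have q'T0 : q' \notin T0.
  apply/negP => q'T.
  have q's : q' \in s0 by [].
  have ix : (index q' s0 < k')%N by rewrite -cT0 index_mem.
  have rq : (q' <= B)%MS.
    have -> : q' = row (Ordinal ix) B by rewrite /B /mxs rowK /= nth_index.
    exact: row_sub.
  have := sq_min q' hG rq; rewrite subrr.
  have -> : sq (0 : 'rV[R]_d) = 0 by rewrite sqE big1 // => i _; rewrite mxE expr0n.
  move=> hle; move: dq'; rewrite /H dist_split //; move: hle.
  set z := sq _ => hle.
  have -> : z = 0 by apply/le_anti; rewrite hle sq_ge0.
  by rewrite sqrtr0 ltxx.
set T' := q' |` T0.
have T'U : T' `<=` U.
  apply/fsubsetP => x; rewrite !inE => /orP [/eqP ->|/andP [_ xT]] //.
  exact: fsubsetP TU x xT.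
have cT' : #|`T'| = k'.+1.
  by rewrite /T' cardfsU1 q'T0 cT0.
have eT' : gram k'.+1 (enum_fset T') = dist q' H ^+ 2 * \det (B *m B^T).
  rewrite (@gram_enum T' k'.+1 (q' :: s0)) //=; last by rewrite cT0.
    by rewrite gram_cons gram_split.
  by rewrite us0 andbT.
  by move=> x; rewrite in_cons !inE.
have ineq : gram k'.+1 (enum_fset T) / alpha ^+ 2 <= gram k'.+1 (enum_fset T').
  rewrite eT eT' mulrAC; apply: ler_wpM2r; first exact: ltW.
  rewrite -expr_div_n; apply: lerXn2r; rewrite ?nnegrE.
  - by rewrite divr_ge0 // ltW.
  - exact: ltW.
  - by rewrite -Eh.
have gT' : 0 < gram k'.+1 (enum_fset T').
  by rewrite eT' mulr_gt0 // exprn_gt0.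
have cD' : #|`(T' `\` UC)| = n.
  move: cD; rewrite (cardfsD1 q (T `\` UC)) in_fsetD qUC qT add1n => -[] <-.
  congr (size (enum_fset _)); apply/fsetP => x; rewrite !inE.
  case: (eqVneq x q') => [->|]; first by rewrite q'UC /= andbF.
  by move=> _ /=; case: (x \notin UC); case: (x != q).
have [T'' [T''UC cT'' g'']] := IH T' T'U cT' gT' cD'.
exists T''; split => //; apply: (le_trans _ g'').
rewrite mulnS exprD invfM mulrA; apply: ler_wpM2r => //.
by rewrite invr_ge0 exprn_ge0 // ltW.
Qed.

End Step.



Theorem corollary3p4 (R : realType) (d k : nat) (alpha : R)
    (c : {fset 'rV[R]_d} -> {fset 'rV[R]_d}) :
  (1 <= k)%N -> (k <= d)%N -> 1 <= alpha ->
  (forall P : {fset 'rV[R]_d}, fsubset (c P) P /\ approx_coreset k alpha (c P) P) ->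
  forall (m : nat) (Ps : 'I_m -> {fset 'rV[R]_d}), (1 <= m)%N ->
    maxdet k (fbigU (fun i => c (Ps i))) >= maxdet k (fbigU Ps) / alpha ^+ (2 * k).
Proof.
case: k => [//|k'] _ _ a1 hc m Ps _.
have a0 : 0 < alpha by apply: lt_le_trans a1.
set U := fbigU Ps; set UC := fbigU (fun i => c (Ps i)).
have hrep : forall q, q \in U -> exists P C : {fset 'rV[R]_d},
  [/\ q \in P, fsubset C UC, fsubset C U & approx_coreset k'.+1 alpha C P].
  move=> q /mem_fbigU [i qi]; exists (Ps i), (c (Ps i)); split => //.
  - exact: (sub_fbigU (fun i => c (Ps i)) i).
  - exact: fsubset_trans (hc (Ps i)).1 (sub_fbigU Ps i).
  - exact: (hc (Ps i)).2.
have M0 : 0 <= maxdet k'.+1 UC by apply: bigmax_ge0.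
have [E0|[S [Sin Sk E]]] := bigmax_att (enum_fset (fpowerset U))
   (fun S : {fset 'rV[R]_d} => #|` S| == k'.+1)
   (fun S => \det (ptmx k'.+1 S *m (ptmx k'.+1 S)^T)).
  by rewrite /maxdet E0 mul0r.
rewrite /maxdet E -/(maxdet _ _).
change (\det (ptmx k'.+1 S *m (ptmx k'.+1 S)^T)) with (gram k'.+1 (enum_fset S)).
have aK : 0 < alpha ^+ (2 * k'.+1) by rewrite exprn_gt0.
case: (leP (gram k'.+1 (enum_fset S)) 0) => gS.
  apply: le_trans M0; apply: mulr_le0_ge0 => //; rewrite invr_ge0 ltW //.
have SU : fsubset S U by rewrite -fpowersetE.
have [T [TUC cT gT]] := step a1 hrep SU (eqP Sk) gS (erefl _).
apply: le_trans (_ : gram k'.+1 (enum_fset T) <= _).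
  apply: le_trans gT; apply: ler_wpM2l; first exact: ltW.
  rewrite lef_pV2 ?posrE ?exprn_gt0 //; apply: ler_weXn2l => //.
  rewrite leq_mul2l /= -(eqP Sk); apply: fsubset_leq_card; exact: fsubsetDl.
apply: (@bigmax_ge R _ (enum_fset (fpowerset UC)) (fun S => #|` S| == k'.+1)
   (fun S => \det (ptmx k'.+1 S *m (ptmx k'.+1 S)^T)) T).
  by rewrite fpowersetE.
by rewrite cT.
Qed.
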